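(* Let $f\colon[0,1]\to[0,1]$ be a unary aggregation function, let $D(f)=\{c\in\,]0,1[\,:\ \bigvee_{x<c}f(x)<f(c)\}$, and for $a\in\,]0,1[$ let $h^f_a(x)=G^1_{f(a)}(x)\wedge\chi_a(x)$. Then for all $x\in[0,1]$, $$f(x)=\bigvee_{q\in\mathbb{Q}\cap]0,1[}h^f_q(x)\ \vee\ \bigvee_{c\in D(f)}h^f_c(x).$$
   Context: A unary aggregation function on $[0,1]$ is a nondecreasing function $f\colon[0,1]\to[0,1]$ with $f(0)=0$, $f(1)=1$. For $a\in[0,1]$, $\chi_a(x)=1$ if $x\ge a$ and $x\neq0$, and $\chi_a(x)=0$ otherwise. For $b\in[0,1]$, $G^1_b(x)=\mathsf{Med}_b(\chi_0(x),\chi_1(x))$, where $\mathsf{Med}_b(x,y)$ is the median of $x,y,b$ (so $G^1_b(0)=0$, $G^1_b(1)=1$, $G^1_b(x)=b$ for $x\in\,]0,1[$). The supremum over the empty set is $0$. *)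

(* Defs.v *)
From mathcomp Require Import all_boot all_order all_algebra.
From mathcomp Require Import all_classical all_reals.
Set Implicit Arguments. Unset Strict Implicit. Unset Printing Implicit Defensive.
Import Order.TTheory GRing.Theory Num.Theory.
Local Open Scope ring_scope.
Local Open Scope classical_set_scope.

(* unary aggregation function on [0,1] (f : R -> R, only its values on [0,1] matter) *)
Definition aggregation1 (R : realType) (f : R -> R) : Prop :=
  (forall x, 0 <= x <= 1 -> 0 <= f x <= 1) /\
  (forall x y, 0 <= x -> x <= y -> y <= 1 -> f x <= f y) /\
  f 0 = 0 /\ f 1 = 1.

Definition chi (R : realType) (a x : R) : R :=
  if (a <= x) && (x != 0) then 1 else 0.

Definition Med (R : realType) (b x y : R) : R :=
  Num.max (Num.min x y) (Num.min (Num.max x y) b).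

Definition G1 (R : realType) (b x : R) : R := Med b (chi 0 x) (chi 1 x).

Definition Dset (R : realType) (f : R -> R) : set R :=
  [set c | 0 < c < 1 /\ sup (f @` [set x | 0 <= x < c]) < f c].

Definition hf (R : realType) (f : R -> R) (a x : R) : R :=
  Num.min (G1 (f a) x) (chi a x).

(* Main.v *)
Require Import Defs.
From mathcomp Require Import all_boot all_order all_algebra.
From mathcomp Require Import all_classical all_reals.
Import Order.TTheory GRing.Theory Num.Theory.
Local Open Scope ring_scope.
Local Open Scope classical_set_scope.

Section S.
Lemma mnl {R : realType} {x y : R} : x <= y -> Num.min x y = x. Proof. by move/min_idPl. Qed.
Lemma mnr {R : realType} {x y : R} : y <= x -> Num.min x y = y. Proof. by move/min_idPr. Qed.
Lemma mxl {R : realType} {x y : R} : y <= x -> Num.max x y = x. Proof. by move/max_idPl. Qed.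
Lemma mxr {R : realType} {x y : R} : x <= y -> Num.max x y = y. Proof. by move/max_idPr. Qed.

Variables (R : realType) (f : R -> R).
Hypothesis hf1 : aggregation1 f.

Lemma fab a : 0 <= a <= 1 -> 0 <= f a <= 1.
Proof. by case: hf1 => H _; apply: H. Qed.

Lemma hf_mid a x : 0 < a < 1 -> 0 < x < 1 ->
  hf f a x = if a <= x then f a else 0.
Proof.
move=> /andP[a0 a1] /andP[x0 x1].
have /andP[fa0 fa1] : 0 <= f a <= 1 by apply: fab; rewrite !ltW.
rewrite /hf /G1 /Med /chi (gt_eqF x0) (ltW x0) /= (ltNge x 1) in x1 *.
rewrite (negbTE x1) andbT.
rewrite (mnr ler01) (mxl ler01) (mnr fa1) (mxr fa0).
by rewrite andbT; case: ifP => _; [rewrite (mnl fa1) | rewrite (mnr fa0)].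
Qed.


Lemma hf_0 a : 0 < a < 1 -> hf f a 0 = 0.
Proof.
move=> /andP[a0 a1].
have /andP[fa0 fa1] : 0 <= f a <= 1 by apply: fab; rewrite !ltW.
rewrite /hf /G1 /Med /chi eqxx !andbF.
by rewrite minxx maxxx (mnl fa0) maxxx minxx.
Qed.

Lemma hf_1 a : 0 < a < 1 -> hf f a 1 = 1.
Proof.
move=> /andP[a0 a1].
have /andP[fa0 fa1] : 0 <= f a <= 1 by apply: fab; rewrite !ltW.
rewrite /hf /G1 /Med /chi oner_neq0 ler01 (ltW a1) lexx /=.
by rewrite !minxx !maxxx (mnr fa1) (mxl fa1) minxx.
Qed.

Lemma hf_le a x : 0 < a < 1 -> 0 <= x <= 1 -> 0 <= hf f a x <= f x.
Proof.
move=> ha /andP[x0 x1].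
case: hf1 => _ [mon [f0 f1]].
have [->|xn0] := eqVneq x 0; first by rewrite hf_0 // f0 lexx.
have [->|xn1] := eqVneq x 1; first by rewrite hf_1 // f1 ler01 lexx.
have hx : 0 < x < 1 by rewrite !lt_neqAle xn1 x1 eq_sym xn0 x0.
rewrite hf_mid //; case: ifP => hax.
  case/andP: ha => a0 a1.
  have /andP[fa0 _] : 0 <= f a <= 1 by apply: fab; rewrite !ltW.
  by rewrite (mon a x (ltW a0) hax x1) andbT.
have /andP[fx0 _] : 0 <= f x <= 1 by apply: fab; rewrite x0.
by rewrite lexx /=.
Qed.
End S.
Arguments fab {R f}.
Arguments hf_mid {R f}.
Arguments hf_0 {R f}.
Arguments hf_1 {R f}.
Arguments hf_le {R f}.

Lemma le_supE {R : realType} {E : set R} {e a : R} :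
  has_ubound E -> E e -> a <= e -> a <= sup E.
Proof.
move=> hu He ae; apply: le_trans ae _.
by apply: sup_upper_bound => //; split => //; exists e.
Qed.

Theorem lemma5 (R : realType) (f : R -> R) :
  aggregation1 f ->
  forall x : R, 0 <= x <= 1 ->
    f x = Num.max
            (sup [set hf f (ratr q) x | q in [set q : rat | 0 < q < 1]])
            (sup [set hf f c x | c in Dset f]).
Proof.
move=> hf1 x hx.
have hx' := hx; case/andP: hx' => x0 x1.
have [fx0 _] := andP (fab hf1 x hx).
case: (hf1) => _ [mon [f0 f1]].
set S := [set hf f (ratr q) x | q in _].
set T := [set hf f c x | c in _].
have ratP : forall q : rat, 0 < q < 1 -> 0 < (ratr q : R) < 1.
  by move=> q /andP[q0 q1]; rewrite ltr0q q0 -(rmorph1 (@ratr R)) ltr_rat q1.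
have ratP' : forall q : rat, 0 < (ratr q : R) < 1 -> 0 < q < 1.
  by move=> q /andP[q0 q1]; rewrite -(ltr0q R) q0 -(ltr_rat R) rmorph1 q1.
have SubS : has_ubound S.
  by exists (f x) => _ [q /ratP hq <-]; case/andP: (hf_le hf1 _ _ hq hx).
have SubT : has_ubound T.
  by exists (f x) => _ [c [hc _] <-]; case/andP: (hf_le hf1 _ _ hc hx).
have [q0 hq0] := rat_in_itvoo (@ltr01 R).
have hq0' : 0 < q0 < 1 by apply: ratP'; move: hq0; rewrite in_itv.
apply/eqP; rewrite eq_le; apply/andP; split; last first.
  rewrite ge_max; apply/andP; split.
    apply: ge_sup; first by exists (hf f (ratr q0) x), q0.
    by move=> _ [q /ratP hq <-]; case/andP: (hf_le hf1 _ _ hq hx).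
  have [[y Ty]|nT] := pselect (exists y, T y); last first.
    rewrite (_ : T = set0) ?sup0 //; apply/seteqP; split => z //= Tz.
    by apply: nT; exists z.
  apply: ge_sup; first by exists y.
  by move=> _ [c [hc _] <-]; case/andP: (hf_le hf1 _ _ hc hx).
rewrite le_max.
have [xD|xnD] := pselect (Dset f x).
  apply/orP; right; apply: (le_supE SubT (e := hf f x x)); first by exists x.
  by case: xD => hx2 _; rewrite (hf_mid hf1) // lexx.
apply/orP; left.
have [xe|xn0] := eqVneq x 0.
  apply: (le_supE SubS (e := hf f (ratr q0) x)); first by exists q0.
  by rewrite xe f0 (hf_0 hf1) // ratP.
have [xe|xn1] := eqVneq x 1.
  apply: (le_supE SubS (e := hf f (ratr q0) x)); first by exists q0.
  by rewrite xe f1 (hf_1 hf1) // ratP.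
have hx2 : 0 < x < 1 by rewrite !lt_neqAle xn1 x1 eq_sym xn0 x0.
have : ~ (sup (f @` [set y | 0 <= y < x]) < f x) by move=> h; apply: xnD; split.
move/negP; rewrite -leNgt => /le_trans; apply.
apply: ge_sup; first by exists (f 0), 0 => //=; rewrite lexx; case/andP: hx2.
move=> _ [y /andP[y0 yx] <-].
have [q] := rat_in_itvoo yx; rewrite in_itv /= => /andP[yq qx].
have hq : 0 < (ratr q : R) < 1.
  by rewrite (le_lt_trans y0 yq) (lt_le_trans qx x1).
apply: (le_supE SubS (e := hf f (ratr q) x)); first by exists q => //; apply: ratP'.
rewrite (hf_mid hf1) // (ltW qx).
apply: mon => //; [exact: ltW | case/andP: hq => _; exact: ltW].
Qed.
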